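(* There is a constant $c$ such that the following holds. Let $L\subseteq\{a\}^*$ be a unary star-free language accepted by an NFA with $n$ states. Then there is a number $N\leq c\,n^2$ such that $a^N\in L$ if and only if $a^{N+k}\in L$ for all $k\in\mathbb{N}_{\geq 0}$.
   Context: Star-free languages are those obtained from finite languages by finitely many applications of union, concatenation and complement (in $\{a\}^*$). NFAs have one initial state and no $\varepsilon$-transitions. *)

(* Defs.v *)
From mathcomp Require Import all_boot.
Set Implicit Arguments. Unset Strict Implicit. Unset Printing Implicit Defensive.

(* The unary alphabet {a} is modelled by [unit] (a = tt); words are [seq unit],
   so a^k is [nseq k tt]. A language is a predicate on words. *)
Definition word := seq unit.
Definition lang := word -> Prop.

Definition lang_union (L1 L2 : lang) : lang := fun w => L1 w \/ L2 w.
Definition lang_cat (L1 L2 : lang) : lang :=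
  fun w => exists u v, w = u ++ v /\ L1 u /\ L2 v.
Definition lang_compl (L : lang) : lang := fun w => ~ L w.
Definition lang_fin (s : seq word) : lang := fun w => w \in s.

Inductive star_free : lang -> Prop :=
| sf_fin (s : seq word) : star_free (lang_fin s)
| sf_union L1 L2 : star_free L1 -> star_free L2 -> star_free (lang_union L1 L2)
| sf_cat L1 L2 : star_free L1 -> star_free L2 -> star_free (lang_cat L1 L2)
| sf_compl L : star_free L -> star_free (lang_compl L).

Record nfa (n : nat) := NFA {
  init : 'I_n;
  delta : rel 'I_n;
  final : pred 'I_n
}.

Definition nfa_accepts n (A : nfa n) (w : word) : Prop :=
  exists p : seq 'I_n,
    size p = size w /\ path (delta A) (init A) p /\ final A (last (init A) p).

Definition accepts_lang n (A : nfa n) (L : lang) : Prop :=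
  forall w, nfa_accepts A w <-> L w.

(* Main.v *)
Require Import Defs.
From mathcomp Require Import all_boot.
From mathcomp Require Import zify.
From Stdlib Require Import Classical.
Set Implicit Arguments. Unset Strict Implicit.

Definition W n (A : nfa n) (p q : 'I_n) (m : nat) : Prop :=
  exists ps : seq 'I_n, size ps = m /\ path (delta A) p ps /\ last p ps = q.

Lemma W_cat n (A : nfa n) p q r a b : W A p q a -> W A q r b -> W A p r (a + b).
Proof.
move=> [ps1 [s1 [p1 l1]]] [ps2 [s2 [p2 l2]]]; exists (ps1 ++ ps2).
by rewrite size_cat cat_path last_cat l1 p1 p2 s1 s2.
Qed.

Lemma W_pump n (A : nfa n) s e t : W A s s e -> W A s s (t * e).
Proof.
move=> H; elim: t => [|t IH]; first by exists [::].
by rewrite mulSn; apply: W_cat H IH.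
Qed.

Lemma last_take_nth (T : Type) (p : T) ps i : i <= size ps ->
  last p (take i ps) = nth p (p :: ps) i.
Proof.
move=> hi; rewrite (last_nth p) size_take_min.
have -> : minn i (size ps) = i by lia.
have -> : p :: take i ps = take i.+1 (p :: ps) by [].
by rewrite nth_take.
Qed.

Lemma W_split n (A : nfa n) p ps i : path (delta A) p ps -> i <= size ps ->
  W A p (nth p (p :: ps) i) i /\ W A (nth p (p :: ps) i) (last p ps) (size ps - i).
Proof.
move=> hp hi; rewrite -(cat_take_drop i ps) cat_path in hp.
case/andP: hp => h1 h2.
split.
  exists (take i ps); split; first by rewrite size_take_min; lia.
  by split => //; rewrite last_take_nth.
exists (drop i ps); split; first by rewrite size_drop.
rewrite -last_take_nth //; split => //.
by rewrite -last_cat cat_take_drop.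
Qed.

Lemma cycle_lemma n (A : nfa n) p q a d : W A p q a -> 0 < d -> n * d <= a ->
  exists r i j, [/\ i < j <= n * d, d %| j - i, W A p r i, W A r r (j - i)
                 & W A r q (a - j)].
Proof.
move=> [ps [sz [hp hl]]] d0 had.
pose f (k : 'I_(n * d).+1) : 'I_n * 'I_d :=
  (nth p (p :: ps) k, Ordinal (ltn_pmod k d0)).
have : ~~ injectiveb f.
  apply/negP => /injectiveP /leq_card; rewrite card_prod !card_ord; lia.
case/injectivePn => x [y] nxy efxy.
wlog xy : x y nxy efxy / x < y.
  move=> Hw; case: (ltngtP x y) => h.
  - exact: Hw nxy efxy h.
  - by apply: (Hw y x); [rewrite eq_sym | rewrite efxy |].
  - by move/val_inj: h; move/eqP: nxy.
case: efxy => e1 e2.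
have yle : y <= size ps by have := ltn_ord y; lia.
have [Hp Hs] := W_split hp yle.
have ile : (x : nat) <= size (take y ps) by rewrite size_take_min; lia.
have hpt : path (delta A) p (take y ps).
  by move: hp; rewrite -{1}(cat_take_drop y ps) cat_path => /andP [].
have [Hp1 Hp2] := W_split hpt ile.
have ex : nth p (p :: take y ps) x = nth p (p :: ps) x.
  have -> : p :: take y ps = take y.+1 (p :: ps) by [].
  by rewrite nth_take //; lia.
move: Hp1 Hp2; rewrite ex e1 last_take_nth // size_take_min => Hp1 Hp2.
exists (nth p (p :: ps) y), x, y; split => //.
- by have := ltn_ord y; lia.
- by rewrite -eqn_mod_dvd ?e2 //; lia.
- by have -> : y - x = minn y (size ps) - x by lia.
- by rewrite -hl -sz.
Qed.

Lemma reduce n (A : nfa n) r q e : 0 < e -> forall a, W A r q a ->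
  exists a0 t, [/\ a0 < n * e, a = a0 + t * e & W A r q a0].
Proof.
move=> e0 a; elim: a {-2}a (leqnn a) => [|B IH] a ha H.
  exists a, 0; split => //; last lia.
  have := ltn_ord r; have := e0; nia.
case: (ltnP a (n * e)) => hlt.
  by exists a, 0; split => //; lia.
have [x [i [j [/andP [ij jle] dv W1 W2 W3]]]] := cycle_lemma H e0 hlt.
have Hc := W_cat W1 W3.
have [a0 [t [h1 h2 h3]]] := IH (i + (a - j)) ltac:(lia) Hc.
case/dvdnP: dv => k hk.
exists a0, (t + k); split => //; lia.
Qed.

Lemma word_nseq (w : word) : w = nseq (size w) tt.
Proof. by elim: w => [|[] w IH] //=; rewrite -IH. Qed.

Lemma acc_iff n (A : nfa n) m :
  nfa_accepts A (nseq m tt) <-> exists q, final A q /\ W A (init A) q m.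
Proof.
split.
  move=> [ps [s [p f]]]; exists (last (init A) ps); split => //.
  by exists ps; rewrite s size_nseq.
move=> [q [f [ps [s [p l]]]]]; exists ps; rewrite size_nseq l; by [].
Qed.

Definition ev_const (L : lang) := exists M (b : bool),
  forall m, M <= m -> (L (nseq m tt) <-> b).

Lemma cat_iff L1 L2 m : lang_cat L1 L2 (nseq m tt) <->
  exists i, i <= m /\ L1 (nseq i tt) /\ L2 (nseq (m - i) tt).
Proof.
split.
  move=> [u [v [e [h1 h2]]]].
  have sz : m = size u + size v by rewrite -size_cat -e size_nseq.
  exists (size u); split; first lia.
  rewrite -word_nseq; split => //.
  have -> : m - size u = size v by lia.
  by rewrite -word_nseq.
move=> [i [hi [h1 h2]]]; exists (nseq i tt), (nseq (m - i) tt).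
rewrite -nseqD; have -> : i + (m - i) = m by lia.
by [].
Qed.

Lemma sf_ev L : star_free L -> ev_const L.
Proof.
elim => {L}.
- move=> s.
  have [M HM] : exists M, forall w, w \in s -> size w < M.
    elim: s => [|x s [M HM]]; first by exists 0.
    exists (maxn (size x).+1 M) => w; rewrite inE => /orP [/eqP -> | /HM h].
      by rewrite leq_max ltnSn.
    by rewrite leq_max h orbT.
  exists M, false => m hm; split => //.
  by rewrite /lang_fin => /HM; rewrite size_nseq; lia.
- move=> L1 L2 _ [M1 [b1 H1]] _ [M2 [b2 H2]].
  exists (maxn M1 M2), (b1 || b2) => m hm; rewrite /lang_union.
  have h1 : M1 <= m by lia.
  have h2 : M2 <= m by lia.
  rewrite (H1 m h1) (H2 m h2); split; [case=> ->; rewrite ?orbT // | move/orP; tauto].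
- move=> L1 L2 _ [M1 [b1 H1]] _ [M2 [b2 H2]].
  case: b1 H1 => H1; case: b2 H2 => H2.
  + exists (M1 + M2), true => m hm; split => // _; apply/cat_iff.
    exists (m - M2); split; first lia.
    by split; [rewrite H1 | rewrite H2]; rewrite //; lia.
  + case: (classic (exists j, L2 (nseq j tt))) => [[j0 hj]|nj].
    * exists (M1 + j0), true => m hm; split => // _; apply/cat_iff.
      exists (m - j0); split; first lia.
      have -> : m - (m - j0) = j0 by lia.
      by split => //; rewrite H1 //; lia.
    * exists 0, false => m _; split => //; case/cat_iff => i [_ [_ h]].
      by case: nj; exists (m - i).
  + case: (classic (exists j, L1 (nseq j tt))) => [[j0 hj]|nj].
    * exists (j0 + M2), true => m hm; split => // _; apply/cat_iff.
      exists j0; split; first lia.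
      by split => //; rewrite H2 //; lia.
    * exists 0, false => m _; split => //; case/cat_iff => i [_ [h _]].
      by case: nj; exists i.
  + exists (M1 + M2), false => m hm; split => //; case/cat_iff => i [hi [h1 h2]].
    case: (leqP M1 i) => hi1; first by move: h1; rewrite H1.
    by move: h2; rewrite H2 //; lia.
- move=> L _ [M [b H]]; exists M, (~~ b) => m hm; rewrite /lang_compl H //.
  by case: b H; split => // h; apply: h.
Qed.

Theorem lemma20 :
  exists c : nat, forall (L : lang) (n : nat) (A : nfa n),
    star_free L -> accepts_lang A L ->
    exists N : nat, N <= c * n ^ 2 /\
      (forall k : nat, L (nseq N tt) <-> L (nseq (N + k) tt)).
Proof.
exists 2 => L n A sf acc.
have [M [b H]] := sf_ev sf.
case: b H => H.
- exists (n + n * n); split; first nia.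
  suff all : forall l, n + n * n <= l -> L (nseq l tt).
    by move=> k; split => _; apply: all; lia.
  move=> l hl.
  have hm : L (nseq (l + M * n`!) tt).
    by rewrite H //; have := fact_gt0 n; nia.
  move/acc/acc_iff: hm => [q [fq Wq]].
  have [r [i [j [/andP [ij jle] _ W1 W2 W3]]]] := cycle_lemma Wq (isT : 0 < 1) ltac:(lia).
  have e0 : 0 < j - i by lia.
  have [a0 [t [ha0 ht W4]]] := reduce e0 (W_cat W2 W3).
  have /dvdnP [f hf] : (j - i) %| n`! by apply: dvdn_fact; lia.
  set e := j - i in e0 ha0 ht W4 W2 hf.
  have hP : l + (M * f) * e = i + a0 + t * e.
    rewrite -mulnA -hf; move: ht; rewrite /e; lia.
  have ha0' : a0 < n * n by apply: (leq_trans ha0); apply: leq_mul => //; lia.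
  have tP : M * f <= t.
    rewrite -(leq_pmul2r e0); lia.
  have hl' : l = i + (t - M * f) * e + a0 by rewrite mulnBl; nia.
  apply/acc/acc_iff; exists q; split => //; rewrite hl'.
  apply: W_cat W4; apply: W_cat W1 _; exact: W_pump.
- exists n; split; first nia.
  suff none : forall l, n <= l -> ~ L (nseq l tt).
    by move=> k; split => h; exfalso; [apply: (none n) | apply: (none (n + k))]; rewrite // ; lia.
  move=> l hl /acc/acc_iff [q [fq Wq]].
  have [r [i [j [/andP [ij jle] _ W1 W2 W3]]]] := cycle_lemma Wq (isT : 0 < 1) ltac:(lia).
  have Wb := W_cat (W_cat W1 (W_pump M W2)) (W_cat W2 W3).
  have : L (nseq (i + M * (j - i) + (j - i + (l - j))) tt).
    by apply/acc/acc_iff; exists q.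
  by rewrite H //; nia.
Qed.
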